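(* Let $A$ be a linear Nakayama algebra with simple modules $S_0,\dots,S_{n-1}$, Kupisch series $[c_0,\dots,c_{n-1}]$ and Jacobson radical $J$, and let $d_j=\dim_K D(Ae_j)$. Let $0\le i\le n-1$ and $1\le k\le c_i$. Then the indecomposable module $e_iA/e_iJ^k$ has injective dimension at most one if and only if either $k=d_{i+k-1}$, or ($k<d_{i+k-1}$ and $d_{i+k-1}-k=d_{i-1}$) (with the convention $d_{-1}:=0$). Moreover, $k=d_{i+k-1}$ holds if and only if $e_iA/e_iJ^k$ is injective.
   Context: $K$ is a field; a linear Nakayama algebra with $n$ simple modules is a connected algebra $A=KQ/I$ with $Q$ the quiver $0\to1\to\cdots\to n-1$ and $I$ admissible; modules are finite-dimensional right modules. $e_i$ are the primitive idempotents and $S_i$ the simple modules; $e_iA$ is uniserial with composition factors $S_i,S_{i+1},\dots,S_{i+c_i-1}$ from top to socle, where $c_i=\dim_K e_iA$ ([$c_0,\dots,c_{n-1}$] is the Kupisch series). $D=\operatorname{Hom}_K(-,K)$, and $D(Ae_j)$ is the indecomposable injective module with socle $S_j$ (the injective envelope of $S_j$). *)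

(* Defs.v *)
From HB Require Import structures.
From mathcomp Require Import all_boot all_order all_algebra.
Set Implicit Arguments. Unset Strict Implicit. Unset Printing Implicit Defensive.
Import GRing.Theory.
Local Open Scope ring_scope.

(* Linear Nakayama algebra A = KQ/I, Q : 0 -> 1 -> ... -> n-1, given by its
   Kupisch series c_i = dim_K e_i A (i < n).  Admissible + connected means:
   c_{n-1} = 1, c_i >= 2 for i < n-1, c_{i+1} >= c_i - 1; also paths
   stay inside the quiver: i + c_i <= n (a consequence of the above).     *)
Definition kupisch (n : nat) (c : nat -> nat) : Prop :=
  [/\ (0 < n)%N, c n.-1 = 1%N,
      (forall i, (i.+1 < n)%N -> (2 <= c i)%N),
      (forall i, (i.+1 < n)%N -> (c i - 1 <= c i.+1)%N)
    & (forall i, (i < n)%N -> (i + c i <= n)%N)].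

(* Finite-dimensional right A-modules = representations of the bound quiver:
   a vector space M e_j for every vertex j (as row vectors K^(rdim j)) and,
   for the arrow j -> j+1, the linear map M e_j -> M e_{j+1} (right action of
   the arrow), written as a matrix acting on row vectors. *)
Record rep (K : fieldType) := Rep {
  rdim : nat -> nat ;
  rmap : forall j, 'M[K]_(rdim j, rdim j.+1)
}.

Fixpoint path_mx (K : fieldType) (M : rep K) (i l : nat)
  : 'M[K]_(rdim M i, rdim M (l + i)) :=
  match l return 'M[K]_(rdim M i, rdim M (l + i)) with
  | 0 => 1%:M
  | l'.+1 => path_mx M i l' *m rmap M (l' + i)
  end.

Definition is_module (K : fieldType) (n : nat) (c : nat -> nat) (M : rep K) : Prop :=
  (forall j, (n <= j)%N -> rdim M j = 0%N) /\
  (forall i, (i < n)%N -> path_mx M i (c i) = 0).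

Definition homT (K : fieldType) (M N : rep K) :=
  forall j, 'M[K]_(rdim M j, rdim N j).

Definition is_hom (K : fieldType) (M N : rep K) (f : homT M N) : Prop :=
  forall j, rmap M j *m f j.+1 = f j *m rmap N j.

Definition is_mono (K : fieldType) (M N : rep K) (f : homT M N) : Prop :=
  forall j, row_free (f j).

Definition is_epi (K : fieldType) (M N : rep K) (f : homT M N) : Prop :=
  forall j, row_full (f j).

Definition injective_module (K : fieldType) (n : nat) (c : nat -> nat) (I : rep K) : Prop :=
  is_module n c I /\
  forall (X Y : rep K) (f : homT X Y) (g : homT X I),
    is_module n c X -> is_module n c Y ->
    is_hom f -> is_mono f -> is_hom g ->
    exists h : homT Y I, is_hom h /\ forall j, f j *m h j = g j.

Definition injdim_le1 (K : fieldType) (n : nat) (c : nat -> nat) (M : rep K) : Prop :=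
  exists (I0 I1 : rep K) (f : homT M I0) (g : homT I0 I1),
    [/\ injective_module n c I0, injective_module n c I1,
        is_hom f /\ is_hom g,
        is_mono f /\ is_epi g &
        forall j, f j *m g j = 0 /\ (kermx (g j) <= f j)%MS].

(* The module e_i A / e_i J^k: basis the paths of length < k starting at i,
   i.e. one-dimensional at vertices i, ..., i+k-1, arrows acting by 1. *)
Definition quot_mod (K : fieldType) (i k : nat) : rep K :=
  @Rep K (fun j => if (i <= j < i + k)%N then 1%N else 0%N)
    (fun j => const_mx 1).

(* d_j = dim_K D(A e_j) = dim_K A e_j = number of nonzero paths ending at j,
   i.e. number of l <= j with j - l < c_l. *)
Definition dimInj (c : nat -> nat) (j : nat) : nat :=
  count (fun l => (j < l + c l)%N) (iota 0 j.+1).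

Definition dimInj_pred (c : nat -> nat) (i : nat) : nat :=
  if i is i'.+1 then dimInj c i' else 0%N.

(* Main.v *)
Require Import Defs.
From mathcomp Require Import all_boot all_order all_algebra.
From mathcomp Require Import zify.
Set Implicit Arguments. Unset Strict Implicit. Unset Printing Implicit Defensive.

Section Helpers.
Variable K : fieldType.
Local Open Scope ring_scope.
Import GRing.Theory.

Lemma mx_c0 p q (A B : 'M[K]_(p,q)) : q = 0%N -> A = B.
Proof. by move=> e; subst; rewrite (thinmx0 A) (thinmx0 B). Qed.

Lemma mx_r0 p q (A B : 'M[K]_(p,q)) : p = 0%N -> A = B.
Proof. by move=> e; subst; rewrite (flatmx0 A) (flatmx0 B). Qed.

Lemma cmulg p q r (x y : K) :
  (const_mx x : 'M_(p,q)) *m (const_mx y : 'M_(q,r)) = const_mx (x * y *+ q).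
Proof.
apply/matrixP => i j; rewrite !mxE.
under eq_bigr do rewrite !mxE.
by rewrite sumr_const card_ord.
Qed.

Lemma mulc1 p q (A : 'M[K]_(p,q)) : q = 1%N -> A *m const_mx 1 = A.
Proof.
move=> e; subst; apply/matrixP => i j; rewrite !mxE big_ord1 !mxE mulr1.
by rewrite (ord1 j).
Qed.

Lemma c1mul p q (A : 'M[K]_(p,q)) : p = 1%N -> const_mx 1 *m A = A.
Proof.
move=> e; subst; apply/matrixP => i j; rewrite !mxE big_ord1 !mxE mul1r.
by rewrite (ord1 i).
Qed.

Lemma id_c1 p : p = 1%N -> (1%:M : 'M[K]_p) = const_mx 1.
Proof. by move=> e; subst; apply/matrixP => i j; rewrite !mxE (ord1 i) (ord1 j). Qed.

Lemma c1_free p q : p = 0%N \/ (p = 1%N /\ q = 1%N) -> row_free (const_mx 1 : 'M[K]_(p,q)).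
Proof.
case=> [e|[e1 e2]]; subst; first by rewrite /row_free -leqn0 rank_leq_row.
by rewrite -id_c1 // row_free_unit unitmx1.
Qed.

Lemma c1_full p q : q = 0%N \/ (p = 1%N /\ q = 1%N) -> row_full (const_mx 1 : 'M[K]_(p,q)).
Proof.
case=> [e|[e1 e2]]; subst; first by rewrite /row_full -leqn0 rank_leq_col.
by rewrite -id_c1 // row_full_unit unitmx1.
Qed.

Lemma one_neq0 p : p = 1%N -> (1%:M : 'M[K]_p) != 0.
Proof.
move=> e; subst; apply/eqP => /matrixP /(_ 0 0); rewrite !mxE /=.
by move/eqP; rewrite oner_eq0.
Qed.

Definition pth (M : rep K) (j m : nat) : 'M[K]_(rdim M j, rdim M m) :=
  conform_mx 0 (path_mx M j (m - j)).

Lemma pth_id M j : pth M j j = 1%:M.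
Proof. by rewrite /pth subnn /= conform_mx_id. Qed.

Lemma conf_mul (M : rep K) p x m (e : x = m) (A : 'M[K]_(p, rdim M x)) :
  conform_mx (0 : 'M_(p, rdim M m.+1)) (A *m rmap M x) =
  conform_mx (0 : 'M_(p, rdim M m)) A *m rmap M m.
Proof. by subst; rewrite !conform_mx_id. Qed.

Lemma pthS M j m : (j <= m)%N -> pth M j m.+1 = pth M j m *m rmap M m.
Proof. by move=> h; rewrite /pth subSn //=; apply: conf_mul; exact: (subnK h). Qed.

Lemma pth_trans M j l m : (j <= l <= m)%N -> pth M j m = pth M j l *m pth M l m.
Proof.
case/andP=> jl; elim: m => [|m IH].
  by rewrite leqn0 => /eqP ->; rewrite pth_id mulmx1.
rewrite leq_eqVlt => /orP[/eqP <-|lm]; first by rewrite pth_id mulmx1.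
by rewrite !pthS ?(leq_trans jl) // IH // mulmxA.
Qed.

Lemma pth_left M j m : (j < m)%N -> pth M j m = rmap M j *m pth M j.+1 m.
Proof.
move=> h; rewrite (@pth_trans M j j.+1 m) ?leqnSn //.
by rewrite pthS // pth_id mul1mx.
Qed.

Lemma pth_hom M N (f : homT M N) j m : is_hom f -> (j <= m)%N ->
  pth M j m *m f m = f j *m pth N j m.
Proof.
move=> hf; elim: m => [|m IH].
  by rewrite leqn0 => /eqP ->; rewrite !pth_id mul1mx mulmx1.
rewrite leq_eqVlt => /orP[/eqP <-|lm]; first by rewrite !pth_id mul1mx mulmx1.
by rewrite !pthS // -mulmxA hf mulmxA IH // mulmxA.
Qed.

Lemma conf00 p q p' q' : conform_mx (0 : 'M[K]_(p,q)) (0 : 'M[K]_(p',q')) = 0.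
Proof.
rewrite /conform_mx; case: eqP => // e1; case: eqP => // e2.
by apply/matrixP => i j; rewrite castmxE !mxE.
Qed.

Lemma pth_zero n c M l m : is_module n c M -> (l < n)%N -> (l + c l <= m)%N ->
  pth M l m = 0.
Proof.
move=> [_ hM] hl hm; rewrite (@pth_trans M l (l + c l) m) ?leq_addr //.
by rewrite {1}/pth addKn hM // conf00 mul0mx.
Qed.


Lemma mul_inner0 p q r (A : 'M[K]_(p,q)) (B : 'M[K]_(q,r)) : q = 0%N -> A *m B = 0.
Proof. by move=> e; rewrite (mx_c0 A 0) ?mul0mx. Qed.

Notation Q := (quot_mod K).

Lemma dimQ1 a k j : (a <= j < a + k)%N -> rdim (Q a k) j = 1%N.
Proof. by move=> h; rewrite /= h. Qed.

Lemma dimQ0 a k j : ~~ (a <= j < a + k)%N -> rdim (Q a k) j = 0%N.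
Proof. by move=> h; rewrite /= (negbTE h). Qed.

Lemma rmapQ a k j : rmap (Q a k) j = const_mx 1.
Proof. by []. Qed.

Lemma pthQ a k j m : (a <= j)%N -> (j <= m)%N -> (m < a + k)%N -> pth (Q a k) j m = const_mx 1.
Proof.
move=> aj; elim: m => [|m IH].
  rewrite leqn0 => /eqP e h; subst j; rewrite pth_id id_c1 // dimQ1 //; lia.
rewrite leq_eqVlt => /orP[/eqP e h|jm h]; first subst j.
  by rewrite pth_id id_c1 // dimQ1 //; lia.
rewrite pthS // IH //; last lia.
by rewrite rmapQ cmulg (@dimQ1 a k m) ?mulr1n ?mulr1 //; lia.
Qed.

Lemma kmono n c l l' : kupisch n c -> (l <= l')%N -> (l' < n)%N -> (l + c l <= l' + c l')%N.
Proof.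
move=> [_ _ h2 h3 _] ll'; elim: l' ll' => [|l' IH].
  by rewrite leqn0 => /eqP ->.
rewrite leq_eqVlt => /orP[/eqP -> //|ll'] hn.
have := IH ll' (ltnW hn); have := h2 l' hn; have := h3 l' hn; lia.
Qed.

Lemma Q_module n c a k : kupisch n c -> (a + k <= n)%N -> (k <= c a)%N -> is_module n c (Q a k).
Proof.
move=> hk hn hc; split => [j hj|l hl]; first by rewrite /=; case: ifP => //; lia.
case: (boolP (a <= l < a + k)%N) => h; last by apply: mx_r0; rewrite /= (negbTE h).
apply: mx_c0; have := @kmono n c a l hk; rewrite /=; case: ifP => //; lia.
Qed.

Lemma c1_hom a k a' k' :
  (forall j, (a <= j < a + k)%N -> (a' <= j.+1 < a' + k')%N ->
     (a <= j.+1 < a + k) = (a' <= j < a' + k'))%N ->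
  is_hom (fun j => const_mx 1 : 'M[K]_(rdim (Q a k) j, rdim (Q a' k') j)).
Proof.
move=> H j; rewrite !rmapQ !cmulg.
case hX: (a <= j < a + k)%N; last by apply: mx_r0; rewrite /= hX.
case hY: (a' <= j.+1 < a' + k')%N; last by apply: mx_c0; rewrite /= hY.
by rewrite /= (H j hX hY).
Qed.

Lemma c1_mono a k a' k' :
  (forall j, (a <= j < a + k)%N -> (a' <= j < a' + k')%N) ->
  is_mono (fun j => const_mx 1 : 'M[K]_(rdim (Q a k) j, rdim (Q a' k') j)).
Proof.
move=> H j; apply: c1_free; case h: (a <= j < a + k)%N.
  by right; rewrite /= h H.
by left; rewrite /= h.
Qed.

Lemma c1_epi a k a' k' :
  (forall j, (a' <= j < a' + k')%N -> (a <= j < a + k)%N) ->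
  is_epi (fun j => const_mx 1 : 'M[K]_(rdim (Q a k) j, rdim (Q a' k') j)).
Proof.
move=> H j; apply: c1_full; case h: (a' <= j < a' + k')%N.
  by right; rewrite /= h H.
by left; rewrite /= h.
Qed.


Lemma cnt_mono (p : pred nat) m :
  (forall l l', (l <= l')%N -> (l' < m)%N -> p l -> p l') ->
  forall l, (l < m)%N -> p l = (m - count p (iota 0 m) <= l)%N.
Proof.
elim: m => [|m IH] hp l hl //.
have hcs : (count p (iota 0 m) <= m)%N by rewrite (leq_trans (count_size _ _)) ?size_iota.
rewrite -addn1 iotaD count_cat /= addn0 add0n.
case pm: (p m).
  rewrite leq_eqVlt in hl; case/orP: hl => [/eqP[->]|hl]; first by rewrite pm; apply/esym; lia.
  rewrite (IH _ l hl); first by apply/idP/idP; lia.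
  by move=> x y xy ym; apply: hp => //; lia.
have h0 : count p (iota 0 m) = 0%N.
  rewrite (@eq_in_count _ _ pred0) ?count_pred0 // => x; rewrite mem_iota => hx /=.
  by apply/negP => px; move: (hp x m) pm; rewrite px; move/(_ _ _ isT) => ->; lia.
rewrite h0 subn0 leqNgt addn1 hl /=; apply/negP => pl.
by move: (hp l m) pm; rewrite pl; move/(_ _ _ isT) => ->; lia.
Qed.

Lemma dI_char n c t l : kupisch n c -> (t < n)%N -> (l <= t)%N ->
  (t < l + c l)%N = (t.+1 - dimInj c t <= l)%N.
Proof.
move=> hk tn lt; rewrite /dimInj (@cnt_mono (fun l => t < l + c l)%N t.+1) //.
move=> x y xy yt /= h; apply: (leq_trans h); apply: kmono hk xy _; lia.
Qed.

Lemma dI_le c t : (dimInj c t <= t.+1)%N.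
Proof. by rewrite /dimInj (leq_trans (count_size _ _)) ?size_iota. Qed.

Lemma hom_to_Q (X : rep K) a k (g : homT X (Q a k)) j : is_hom g ->
  (a <= j)%N -> (j <= a + k - 1)%N -> (0 < k)%N ->
  g j = pth X j (a + k - 1)%N *m g (a + k - 1)%N *m const_mx 1.
Proof.
move=> hg aj jb k0.
rewrite (pth_hom hg jb) pthQ //; last lia.
rewrite -mulmxA cmulg (@dimQ1 a k (a + k - 1)); last lia.
by rewrite mulr1n mulr1 mulc1 // dimQ1 //; lia.
Qed.

Lemma Q_inj n c a k : kupisch n c -> (0 < k)%N -> (a + k <= n)%N -> (k <= c a)%N ->
  (a = 0%N \/ (a - 1 + c (a - 1) <= a + k - 1)%N) -> injective_module n c (Q a k).
Proof.
move=> hk k0 hn hc hmax; split; first exact: Q_module.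
move=> X Y f g mX mY hf mf hg.
set b := (a + k - 1)%N.
have [B hB] := row_freeP (mf b).
exists (fun j => pth Y j b *m (B *m g b) *m const_mx 1); split.
  move=> j; case: (ltnP j b) => jb; last first.
    by apply: mx_c0; rewrite /=; case: ifP => //; lia.
  case: (ltnP j a) => ja.
    case: (ltnP j.+1 a) => ja'.
      by apply: mx_c0; rewrite /=; case: ifP => //; lia.
    have ea : a = j.+1 by lia.
    rewrite [RHS]mul_inner0; last by rewrite /=; case: ifP => //; lia.
    rewrite !mulmxA -pth_left //.
    rewrite (pth_zero mY) ?mul0mx //.
      by move: hk => [? ? ? ? hh]; lia.
    case: hmax => [|h]; first lia.
    by move: h; rewrite ea /= subn1 /=; lia.
  rewrite -[RHS]mulmxA rmapQ cmulg (@dimQ1 a k j); last lia.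
  by rewrite mulr1n mulr1 !mulmxA -pth_left.
move=> j; case: (boolP (a <= j <= b)%N) => hj; last first.
  by apply: mx_c0; rewrite /=; case: ifP => //; lia.
rewrite !mulmxA -(pth_hom hf); last lia.
rewrite -(mulmxA (pth X j b)) hB mulmx1 [RHS](hom_to_Q hg) //; lia.
Qed.

Lemma Q_inj_conv n c a k : kupisch n c -> (0 < k)%N -> (a + k <= n)%N -> (k <= c a)%N ->
  (0 < a)%N -> (a + k <= a - 1 + c (a - 1))%N -> ~ injective_module n c (Q a k).
Proof.
case: a => [//|a] hk k0 hn hc _; rewrite subn1 /= => hW [mQ inj].
have mW : is_module n c (Q a k.+1) by apply: Q_module => //; lia.
have hom1 : is_hom (fun j => 1%:M : 'M[K]_(rdim (Q a.+1 k) j, rdim (Q a.+1 k) j)).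
  by move=> j; rewrite mulmx1 mul1mx.
have [h [hh hkk]] := inj (Q a.+1 k) (Q a k.+1) _ _ mQ mW
  (@c1_hom a.+1 k a k.+1 ltac:(move=> j; lia))
  (@c1_mono a.+1 k a k.+1 ltac:(move=> j; lia)) hom1.
have := hh a; rewrite [RHS]mul_inner0; last by rewrite /=; case: ifP => //; lia.
move=> e.
have := hkk a.+1.
have -> : (const_mx 1 : 'M[K]_(rdim (Q a.+1 k) a.+1, rdim (Q a k.+1) a.+1)) =
   (const_mx 1 : 'M[K]_(rdim (Q a.+1 k) a.+1, rdim (Q a k.+1) a)) *m rmap (Q a k.+1) a.
  by rewrite rmapQ cmulg (@dimQ1 a k.+1 a) ?mulr1n ?mulr1 //; lia.
rewrite -mulmxA e mulmx0 => /esym/eqP; apply/negP/one_neq0.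
by rewrite /=; case: ifP => //; lia.
Qed.


Lemma Q_inj_iff n c a k : kupisch n c -> (0 < k)%N -> (a + k <= n)%N -> (k <= c a)%N ->
  (k = dimInj c (a + k - 1) <-> injective_module n c (Q a k)).
Proof.
move=> hk k0 hn hc.
have bn : (a + k - 1 < n)%N by lia.
have ha := @dI_char n c (a + k - 1) a hk bn ltac:(lia).
have hle := dI_le c (a + k - 1).
have Pa : (a + k - 1 < a + c a)%N by lia.
rewrite Pa in ha.
move: ha hle; set d := dimInj c (a + k - 1) => ha hle.
split.
  move=> e; apply: Q_inj => //.
  have [->|a0] := eqVneq a 0%N; first by left.
  right; have := @dI_char n c (a + k - 1) (a - 1) hk bn ltac:(lia).
  rewrite -/d.
  have -> : ((a + k - 1).+1 - d <= a - 1)%N = false by lia.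
  lia.
move=> inj; apply/eqP; apply: contraT => ne.
have [a0|a0] := eqVneq a 0%N; first by subst a; lia.
have := @dI_char n c (a + k - 1) (a - 1) hk bn ltac:(lia).
rewrite -/d.
have -> : ((a + k - 1).+1 - d <= a - 1)%N = true by lia.
move=> hP; exfalso; apply: (@Q_inj_conv n c a k hk k0 hn hc _ _ inj); lia.
Qed.

Lemma mkhom (X : rep K) a k (x : 'rV[K]_(rdim X a)) : (0 < k)%N ->
  x *m pth X a (a + k) = 0 ->
  exists u : homT (Q a k) X, is_hom u /\
    forall j, (a <= j < a + k)%N ->
      (const_mx 1 : 'M[K]_(1, rdim (Q a k) j)) *m u j = x *m pth X a j.
Proof.
move=> k0 hx.
exists (fun j => (const_mx 1 : 'M[K]_(rdim (Q a k) j, 1)) *m (x *m pth X a j)); split.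
  move=> j; case: (boolP (a <= j < a + k)%N) => hj; last first.
    by apply: mx_r0; rewrite /= (negbTE hj).
  case: (ltnP j.+1 (a + k)) => hj1.
    rewrite !mulmxA rmapQ cmulg (@dimQ1 a k j.+1); last lia.
    by rewrite mulr1n mulr1 -!mulmxA pthS //; lia.
  rewrite mul_inner0; last by rewrite /=; case: ifP => //; lia.
  have ej : (a + k = j.+1)%N by lia.
  rewrite ej in hx; rewrite -!mulmxA -pthS; last lia.
  by rewrite hx !mulmx0.
move=> j hj; rewrite mulmxA cmulg (@dimQ1 a k j) // mulr1n mulr1 c1mul //.
Qed.


Lemma nec n c i k s : kupisch n c -> (i < n)%N -> (0 < k)%N -> (k <= c i)%N ->
  (s.+1 < i)%N -> (i <= s + c s)%N -> (s + c s <= i + k - 1)%N ->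
  (i + k <= s.+1 + c s.+1)%N -> injdim_le1 n c (Q i k) -> False.
Proof.
move=> hk hi k0 hc si hW hmax hs1 [I0 [I1 [f [g [inj0 inj1 [hf hg] [mf eg] ex]]]]].
set t := (i + k - 1)%N.
have hn : (i + k <= n)%N by move: (hk) => [? ? ? ? h5]; have := h5 i hi; lia.
have mM : is_module n c (Q i k) by apply: Q_module.
have mV : is_module n c (Q s.+1 (i + k - s.+1)) by apply: Q_module => //; lia.
have mC : is_module n c (Q s.+1 (i - s.+1)) by apply: Q_module => //; lia.
have mW : is_module n c (Q s (i - s)) by apply: Q_module => //; lia.
have [phi [hphi ephi]] := inj0.2 (Q i k) (Q s.+1 (i + k - s.+1)) _ f mM mV
  (@c1_hom i k s.+1 (i + k - s.+1) ltac:(move=> j; lia))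
  (@c1_mono i k s.+1 (i + k - s.+1) ltac:(move=> j; lia)) hf.
set y := (const_mx 1 : 'M[K]_(1, rdim (Q s.+1 (i + k - s.+1)) s.+1)) *m phi s.+1.
have claim1 : y *m pth I0 s.+1 t = (const_mx 1 : 'M[K]_(1, rdim (Q i k) t)) *m f t.
  rewrite /y -mulmxA -(pth_hom hphi); last lia.
  rewrite pthQ; [|lia..].
  rewrite mulmxA cmulg (@dimQ1 s.+1 (i + k - s.+1) s.+1) ?mulr1n ?mulr1; last lia.
  rewrite -ephi mulmxA cmulg (@dimQ1 i k t) ?mulr1n ?mulr1 //; lia.
have claim2 : y *m pth I0 s.+1 i *m g i = 0.
  rewrite /y -(mulmxA _ (phi s.+1)) -(pth_hom hphi); last lia.
  rewrite pthQ; [|lia..].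
  rewrite mulmxA cmulg (@dimQ1 s.+1 (i + k - s.+1) s.+1) ?mulr1n ?mulr1; last lia.
  have -> : (const_mx 1 : 'M[K]_(1, rdim (Q s.+1 (i + k - s.+1)) i)) =
    (const_mx 1 : 'M[K]_(1, rdim (Q i k) i)) *m
    (const_mx 1 : 'M[K]_(rdim (Q i k) i, rdim (Q s.+1 (i + k - s.+1)) i)).
    by rewrite cmulg (@dimQ1 i k i) ?mulr1n ?mulr1 //; lia.
  by rewrite -(mulmxA _ _ (phi i)) ephi -mulmxA (ex i).1 mulmx0.
have [psi [hpsi epsi]] := @mkhom I1 s.+1 (i - s.+1) (y *m g s.+1) ltac:(lia)
  ltac:(rewrite subnKC; [|lia]; rewrite -mulmxA -(pth_hom hg) ?mulmxA //; lia).
have [chi [hchi echi]] := inj1.2 (Q s.+1 (i - s.+1)) (Q s (i - s)) _ psi mC mW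
  (@c1_hom s.+1 (i - s.+1) s (i - s) ltac:(move=> j; lia))
  (@c1_mono s.+1 (i - s.+1) s (i - s) ltac:(move=> j; lia)) hpsi.
set z := (const_mx 1 : 'M[K]_(1, rdim (Q s (i - s)) s)) *m chi s.
have hz : z *m rmap I1 s = y *m g s.+1.
  rewrite -mulmxA -hchi mulmxA.
  have -> : (const_mx 1 : 'M[K]_(1, rdim (Q s (i - s)) s)) *m rmap (Q s (i - s)) s =
    (const_mx 1 : 'M[K]_(1, rdim (Q s.+1 (i - s.+1)) s.+1)) *m
    (const_mx 1 : 'M[K]_(rdim (Q s.+1 (i - s.+1)) s.+1, rdim (Q s (i - s)) s.+1)).
    rewrite rmapQ !cmulg (@dimQ1 s (i - s) s); last lia.
    by rewrite (@dimQ1 s.+1 (i - s.+1) s.+1) //; lia.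
  by rewrite -mulmxA echi epsi ?pth_id ?mulmx1 //; lia.
have [B hB] := row_fullP (eg s).
set u := z *m B.
have hu : u *m g s = z by rewrite -mulmxA hB mulmx1.
have hw : (u *m rmap I0 s - y) *m g s.+1 = 0.
  by rewrite mulmxBl -mulmxA hg mulmxA hu hz subrr.
have hw0 : u *m rmap I0 s - y = 0.
  have : (u *m rmap I0 s - y <= f s.+1)%MS.
    by apply: submx_trans (ex s.+1).2; apply/sub_kermxP.
  rewrite (mx_r0 (f s.+1) 0); last by rewrite /=; case: ifP => //; lia.
  exact: submx0null.
have ey : y = u *m rmap I0 s by move/eqP: hw0; rewrite subr_eq0 => /eqP.
have : y *m pth I0 s.+1 t = 0.
  rewrite ey -mulmxA -pth_left; last lia.
  rewrite (pth_zero inj0.1) ?mulmx0 //; lia.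
rewrite claim1 => e0.
have : (const_mx 1 : 'M[K]_(rdim (Q i k) t, 1)) *m
   ((const_mx 1 : 'M[K]_(1, rdim (Q i k) t)) *m f t) = 0 by rewrite e0 mulmx0.
rewrite mulmxA cmulg mulr1n mulr1 c1mul; last by apply: dimQ1; lia.
move=> ft0; move: (mf t); rewrite ft0 /row_free mxrank0 dimQ1 //; lia.
Qed.


Lemma full0 p q (A : 'M[K]_(p,q)) : q = 0%N -> row_full A.
Proof. by move=> e; subst; rewrite /row_full -leqn0 rank_leq_col. Qed.

Lemma zero_inj n c : injective_module n c (Q 0 0).
Proof.
split.
  split => [j _|l _] //.
  by apply: mx_c0.
move=> X Y f g _ _ _ _ _; exists (fun j => 0); split.
  by move=> j; apply: mx_c0.
by move=> j; apply: mx_c0.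
Qed.

End Helpers.

Theorem mainTheorem5 (K : fieldType) (n : nat) (c : nat -> nat) (i k : nat) :
  kupisch n c -> (i < n)%N -> (1 <= k <= c i)%N ->
  (injdim_le1 n c (quot_mod K i k) <->
     (k = dimInj c (i + k - 1) \/
      ((k < dimInj c (i + k - 1))%N /\
       dimInj c (i + k - 1) - k = dimInj_pred c i)%N)) /\
  (k = dimInj c (i + k - 1) <-> injective_module n c (quot_mod K i k)).
Proof.
move=> hk hi /andP[k1 kc].
have hn : (i + k <= n)%N by move: (hk) => [? ? ? ? h5]; have := h5 i hi; lia.
have tn : (i + k - 1 < n)%N by lia.
have hPi := @dI_char n c (i + k - 1) i hk tn ltac:(lia).
have hle := dI_le c (i + k - 1).
have injiff := @Q_inj_iff K n c i k hk k1 hn kc.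
have hPs := @dI_char n c (i + k - 1) ((i + k - 1).+1 - dimInj c (i + k - 1)) hk tn ltac:(lia).
move: hPi hle hPs injiff; set d := dimInj c (i + k - 1) => hPi hle hPs injiff.
rewrite leqnn in hPs.
have Pi : (i + k - 1 < i + c i)%N by lia.
rewrite Pi in hPi.
split; last exact: injiff.
split.
  move=> hid; case: (eqVneq k d) => [e|ne]; [by left|right].
  split; first lia.
  have dd : d = dimInj c (i + k - 1) by [].
  case: i hi d dd kc hn tn hPi hPs injiff hid ne Pi hle => [|i] hi d dd kc hn tn hPi hPs injiff hid ne Pi hle.
    by exfalso; lia.
  rewrite /dimInj_pred.
  set s := ((i.+1 + k - 1).+1 - d)%N in hPs *.
  have sdef : s = ((i.+1 + k - 1).+1 - d)%N by [].
  have hsi : (s <= i)%N by lia.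
  have hi' := @dI_char n c i s hk (ltnW hi) hsi.
  have hei := dI_le c i.
  move: hi' hei; set e := dimInj c i => hi' hei.
  have hes : (i.+1 - e <= s)%N by rewrite -hi'; lia.
  case: (ltnP (i.+1 - e) s) => hlt; last lia.
  exfalso.
  have hs0 : (0 < s)%N by lia.
  have hi2 := @dI_char n c i s.-1 hk (ltnW hi) ltac:(lia).
  have ht2 := @dI_char n c (i.+1 + k - 1) s.-1 hk tn ltac:(lia).
  rewrite -/e in hi2; rewrite -dd in ht2.
  have h1 : (i < s.-1 + c s.-1)%N by rewrite hi2; lia.
  have h2 : ~~ (i.+1 + k - 1 < s.-1 + c s.-1)%N by rewrite ht2; lia.
  apply: (@nec K n c i.+1 k s.-1 hk hi k1 kc); rewrite ?prednK //; lia.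
case=> [e|[lt e]].
  exists (quot_mod K i k), (quot_mod K 0 0), (fun j => 1%:M%R), (fun j => 0%R).
  split.
  - exact: injiff.1.
  - exact: zero_inj.
  - by split => j; [rewrite mulmx1 mul1mx | apply: mx_c0].
  - by split => j; [rewrite row_free_unit unitmx1 | apply: full0].
  - by move=> j; rewrite mulmx0 submx1.
have i0 : (0 < i)%N by lia.
have ep : dimInj_pred c i = dimInj c i.-1 by case: (i) i0.
rewrite ep in e.
have dd : d = dimInj c (i + k - 1) by [].
set s := ((i + k - 1).+1 - d)%N in hPs *.
have sdef : s = ((i + k - 1).+1 - d)%N by [].
move: e; set e' := dimInj c i.-1 => e.
exists (quot_mod K s (i + k - s)), (quot_mod K s (i - s)),
  (fun j => const_mx 1%R), (fun j => const_mx 1%R).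
split.
- apply/(@Q_inj_iff K n c s (i + k - s) hk ltac:(lia) ltac:(lia) ltac:(lia)).
  have -> : (s + (i + k - s) - 1 = i + k - 1)%N by lia.
  rewrite -dd; lia.
- apply/(@Q_inj_iff K n c s (i - s) hk ltac:(lia) ltac:(lia) ltac:(lia)).
  have -> : (s + (i - s) - 1 = i.-1)%N by lia.
  rewrite -/e'; lia.
- by split; apply: c1_hom => j; lia.
- by split; [apply: c1_mono | apply: c1_epi] => j; lia.
move=> j; split.
  case: (boolP (i <= j < i + k)%N) => hj; [apply: mx_c0 | apply: mx_r0].
    by rewrite /=; case: ifP => //; lia.
  by rewrite /= (negbTE hj).
case: (boolP (i <= j < i + k)%N) => hj.
  apply: submx_full; apply: c1_full; right; split; first by rewrite /= hj.
  by rewrite /=; case: ifP => //; lia.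
case: (boolP (s <= j < i)%N) => hj2.
  have : row_free (const_mx 1%R : 'M[K]_(rdim (quot_mod K s (i + k - s)) j,
                                        rdim (quot_mod K s (i - s)) j)).
    by apply: c1_free; right; split; rewrite /=; case: ifP => //; lia.
  by rewrite -kermx_eq0 => /eqP ->; exact: sub0mx.
rewrite (mx_r0 (kermx _) 0%R) ?sub0mx //.
by rewrite /=; case: ifP => //; lia.
Qed.
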